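(* Let $\mathcal{E}$ be a sufficiently cocomplete category, let $\phi:\mathbb{S}\to\mathbb{R}$ be a morphism of generalized Reedy categories and let $k\in\mathbb{N}$. Suppose that the commutative square formed by $\phi^+_k:\mathbb{S}^+((k))\to\mathbb{R}^+((k))$, $\phi_k:\mathbb{G}_k(\mathbb{S})\to\mathbb{G}_k(\mathbb{R})$ and the two codomain functors $\mathbb{S}^+((k))\to\mathbb{G}_k(\mathbb{S})$, $\mathbb{R}^+((k))\to\mathbb{G}_k(\mathbb{R})$ is a pullback of categories. Then for each object $X$ of $\mathcal{E}^{\mathbb{R}}$ the natural comparison map $L_k(\phi^*(X))\to\phi_k^*(L_k(X))$ is an isomorphism. Moreover, this pullback hypothesis holds in the following two cases: (i) $\mathbb{S}=\mathbb{R}^+(n)$ and $\phi:\mathbb{R}^+(n)\to\mathbb{R}$ is the domain functor; (ii) $\mathbb{S}=\mathbb{R}_{\leq n}$ and $\phi:\mathbb{R}_{\leq n}\to\mathbb{R}$ is the canonical embedding.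
   Context: A generalized Reedy category is a small category $\mathbb{R}$ with wide subcategories $\mathbb{R}^+,\mathbb{R}^-$ and degree $d:\mathrm{Ob}(\mathbb{R})\to\mathbb{N}$ such that (i) non-invertible morphisms of $\mathbb{R}^+$ (resp. $\mathbb{R}^-$) strictly raise (resp. lower) degree and isomorphisms preserve degree; (ii) $\mathbb{R}^+\cap\mathbb{R}^-=\mathrm{Iso}(\mathbb{R})$; (iii) every morphism factors as $gh$ with $g\in\mathbb{R}^+$, $h\in\mathbb{R}^-$, uniquely up to isomorphism; (iv) if $\theta f=f$ with $\theta$ an isomorphism and $f\in\mathbb{R}^-$ then $\theta$ is an identity. A morphism of generalized Reedy categories is a functor preserving $(-)^+,(-)^-$ and degree. Notation: $\mathbb{G}_k(\mathbb{R})$ is the groupoid of objects of degree $k$ and isomorphisms between them; $\mathbb{R}_{\leq n}$ is the full subcategory of objects of degree $\le n$ with the restricted generalized Reedy structure. $\mathbb{R}^+((k))$ has objects the non-invertible morphisms $u:s\to r$ of $\mathbb{R}^+$ with $d(r)=k$, and morphisms from $u$ to $u':s'\to r'$ the commutative squares $gu=u'f$ with $f:s\to s'$ in $\mathbb{R}^+$ and $g:r\to r'$ in $\mathbb{G}_k(\mathbb{R})$; let $c_k:\mathbb{R}^+((k))\to\mathbb{G}_k(\mathbb{R})$ and $d_k:\mathbb{R}^+((k))\to\mathbb{R}$ be the codomain and domain functors. For $X\in\mathcal{E}^{\mathbb{R}}$, $L_k(X)=(c_k)_!d_k^*(X)\in\mathcal{E}^{\mathbb{G}_k(\mathbb{R})}$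 (left Kan extension along $c_k$); concretely $L_k(X)_r=\mathrm{colim}_{(u:s\to r)}X_s$ over non-invertible $u\in\mathbb{R}^+$ into $r$. A morphism $\phi$ of generalized Reedy categories induces functors $\phi_k:\mathbb{G}_k(\mathbb{S})\to\mathbb{G}_k(\mathbb{R})$ and $\phi_k^+:\mathbb{S}^+((k))\to\mathbb{R}^+((k))$, and a natural map $L_k(\phi^*X)\to\phi_k^*(L_k X)$, where $\phi^*$ and $\phi_k^*$ are precomposition. $\mathbb{R}^+(n)$ is the category with objects the non-invertible $u:s\to r$ in $\mathbb{R}^+$ with $d(r)=n$, and morphisms from $u:s\to r$ to $u':s'\to r$ the $w:s\to s'$ with $u=u'w$; it is a generalized Reedy category with degree of $u:s\to r$ equal to $d(s)$, all morphisms in $\mathbb{R}^+(n)^+$, and $\mathbb{R}^+(n)^-$ consisting of the isomorphisms; the domain functor $u\mapsto s$ is a morphism of generalized Reedy categories. *)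

(* Defs.v *)
From Stdlib Require Import ProofIrrelevance Arith.
Set Implicit Arguments.
Unset Strict Implicit.

Record Cat := mkCat {
  Ob :> Type;
  Hom : Ob -> Ob -> Type;
  idm : forall a, Hom a a;
  comp : forall a b c, Hom b c -> Hom a b -> Hom a c; (* comp g f = g o f *)
  comp_idl : forall a b (f : Hom a b), comp (idm b) f = f;
  comp_idr : forall a b (f : Hom a b), comp f (idm a) = f;
  comp_assoc : forall a b c d (h : Hom c d) (g : Hom b c) (f : Hom a b),
      comp h (comp g f) = comp (comp h g) f }.
Arguments Hom {c0} _ _.
Arguments idm {c0} a.
Arguments comp {c0 a b c} _ _.

Definition is_iso {C : Cat} {a b : C} (f : Hom a b) : Prop :=
  exists g : Hom b a, comp g f = idm a /\ comp f g = idm b.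

Record Functor (C D : Cat) := mkFunctor {
  Fobj :> C -> D;
  Fmor : forall a b : C, Hom a b -> Hom (Fobj a) (Fobj b);
  F_id : forall a, Fmor (idm a) = idm (Fobj a);
  F_comp : forall a b c (g : Hom b c) (f : Hom a b),
      Fmor (comp g f) = comp (Fmor g) (Fmor f) }.
Arguments Fobj {C D} f0 _.
Arguments Fmor {C D} f0 {a b} _.

Definition precomp {C D E : Cat} (phi : Functor C D) (X : Functor D E) : Functor C E.
Proof.
  refine (@mkFunctor C E (fun a => Fobj X (Fobj phi a))
            (fun a b f => Fmor X (Fmor phi f)) _ _).
  - intro a; rewrite F_id, F_id; reflexivity.
  - intros a b c g f; rewrite F_comp, F_comp; reflexivity.
Defined.

(* A diagram in E indexed by (the underlying graph of) a small category.
   Colimits of a functor only depend on the underlying graph of the domain. *)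
Record Diagram (E : Cat) := mkDiagram {
  dI : Type;
  dA : dI -> dI -> Type;
  dD : dI -> Ob E;
  dM : forall i j, dA i j -> Hom (dD i) (dD j) }.
Arguments dI {E} d.
Arguments dA {E} d _ _.
Arguments dD {E} d _.
Arguments dM {E} d {i j} _.

Definition is_cocone {E : Cat} (D : Diagram E) (L : E) (lam : forall i, Hom (dD D i) L) : Prop :=
  forall i j (e : dA D i j), comp (lam j) (dM D e) = lam i.
Arguments is_cocone {E} D L lam.

Definition is_colimit {E : Cat} (D : Diagram E) (L : E) (lam : forall i, Hom (dD D i) L) : Prop :=
  is_cocone D L lam /\
  forall (M : E) (mu : forall i, Hom (dD D i) M), is_cocone D M mu ->
    exists! m : Hom L M, forall i, comp m (lam i) = mu i.
Arguments is_colimit {E} D L lam.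

Record PreReedy := mkPreReedy {
  rcat :> Cat;
  plus : forall a b : rcat, Hom a b -> Prop;
  minus : forall a b : rcat, Hom a b -> Prop;
  deg : rcat -> nat }.
Arguments plus {p a b} _.
Arguments minus {p a b} _.
Arguments deg {p} _.

Definition is_GReedy (R : PreReedy) : Prop :=
  (forall a : R, plus (idm a)) /\
  (forall (a b c : R) (g : Hom b c) (f : Hom a b), plus g -> plus f -> plus (comp g f)) /\
  (forall a : R, minus (idm a)) /\
  (forall (a b c : R) (g : Hom b c) (f : Hom a b), minus g -> minus f -> minus (comp g f)) /\
  (forall (a b : R) (f : Hom a b), plus f -> ~ is_iso f -> deg a < deg b) /\
  (forall (a b : R) (f : Hom a b), minus f -> ~ is_iso f -> deg b < deg a) /\
  (forall (a b : R) (f : Hom a b), is_iso f -> deg a = deg b) /\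
  (forall (a b : R) (f : Hom a b), (plus f /\ minus f) <-> is_iso f) /\
  (forall (a b : R) (f : Hom a b),
      exists (c : R) (h : Hom a c) (g : Hom c b), plus g /\ minus h /\ f = comp g h) /\
  (forall (a b : R) (f : Hom a b) (c : R) (h : Hom a c) (g : Hom c b)
          (c' : R) (h' : Hom a c') (g' : Hom c' b),
      plus g -> minus h -> f = comp g h -> plus g' -> minus h' -> f = comp g' h' ->
      exists t : Hom c c', is_iso t /\ comp t h = h' /\ comp g' t = g) /\
  (forall (a b : R) (f : Hom a b) (t : Hom b b),
      is_iso t -> minus f -> comp t f = f -> t = idm b).

Definition is_GMor {S R : PreReedy} (phi : Functor S R) : Prop :=
  (forall (a b : S) (f : Hom a b), plus f -> plus (Fmor phi f)) /\
  (forall (a b : S) (f : Hom a b), minus f -> minus (Fmor phi f)) /\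
  (forall a : S, deg (Fobj phi a) = deg a).

Lemma is_iso_Fmor {C D : Cat} (F : Functor C D) (a b : C) (f : Hom a b) :
  is_iso f -> is_iso (Fmor F f).
Proof.
  intros [g [H1 H2]]; exists (Fmor F g); split;
  rewrite <- F_comp, <- F_id; f_equal; assumption.
Qed.

(* objects of the indexing category of L_k(X)_r : non-invertible u : s -> r in R^+ *)
Definition FibObj (R : PreReedy) (r : R) : Type :=
  {s : R & {u : Hom s r | plus u /\ ~ is_iso u}}.
Arguments FibObj : clear implicits.

Definition Lk_diag {R : PreReedy} {E : Cat} (X : Functor R E) (r : R) : Diagram E :=
  {| dI := FibObj R r;
     dA := fun a b => {w : Hom (projT1 a) (projT1 b) |
                         plus w /\ proj1_sig (projT2 a) = comp (proj1_sig (projT2 b)) w};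
     dD := fun a => Fobj X (projT1 a);
     dM := fun a b w => Fmor X (proj1_sig w) |}.

Lemma GMor_plus_noniso {S R : PreReedy} (hS : is_GReedy S) (hR : is_GReedy R)
  (phi : Functor S R) (hphi : is_GMor phi) (s' s : S) (v : Hom s' s) :
  plus v /\ ~ is_iso v -> plus (Fmor phi v) /\ ~ is_iso (Fmor phi v).
Proof.
  intros [pv nv].
  destruct hS as [_ [_ [_ [_ [hSdeg _]]]]].
  destruct hR as [_ [_ [_ [_ [_ [_ [hRiso _]]]]]]].
  destruct hphi as [hp [_ hd]].
  split; [now apply hp|].
  intro Hi. apply hRiso in Hi. rewrite !hd in Hi.
  pose proof (hSdeg _ _ v pv nv). rewrite Hi in H. exact (Nat.lt_irrefl _ H).
Qed.

Definition fib_map {S R : PreReedy} (hS : is_GReedy S) (hR : is_GReedy R)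
  (phi : Functor S R) (hphi : is_GMor phi) (s : S) (a : FibObj S s)
  : FibObj R (Fobj phi s) :=
  existT _ (Fobj phi (projT1 a))
    (exist _ (Fmor phi (proj1_sig (projT2 a)))
       (GMor_plus_noniso hS hR hphi (proj2_sig (projT2 a)))).

(* objects of R^+((k)) (and also of R^+(k)): non-invertible u : s -> r in R^+ with d(r) = k *)
Record PlusObj (R : PreReedy) (k : nat) := mkPlusObj {
  pdom : R;
  pcod : R;
  parr : Hom pdom pcod;
  pplus : plus parr;
  pniso : ~ is_iso parr;
  pdeg : deg pcod = k }.
Arguments pdom {R k} _.
Arguments pcod {R k} _.
Arguments parr {R k} _.

(* The square  S^+((k)) --phi^+_k--> R^+((k)),  codomain functors to G_k,
   G_k(S) --phi_k--> G_k(R)  is a (strict) pullback of categories: the canonical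
   comparison functor from S^+((k)) to the strict pullback is bijective on
   objects and on morphisms (written out on the underlying data). *)
Definition pullback_cond {S R : PreReedy} (phi : Functor S R) (k : nat) : Prop :=
  (forall (a : PlusObj R k) (b : S), deg b = k -> pcod a = Fobj phi b ->
     exists! x : PlusObj S k,
       pcod x = b /\
       existT (fun p : R * R => Hom (fst p) (snd p))
              (Fobj phi (pdom x), Fobj phi (pcod x)) (Fmor phi (parr x))
       = existT (fun p : R * R => Hom (fst p) (snd p)) (pdom a, pcod a) (parr a)) /\
  (forall (x y : PlusObj S k)
          (f : Hom (Fobj phi (pdom x)) (Fobj phi (pdom y)))
          (g : Hom (Fobj phi (pcod x)) (Fobj phi (pcod y)))
          (g0 : Hom (pcod x) (pcod y)),
     (* (f,g) is a morphism phi^+ x -> phi^+ y of R^+((k)) *)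
     plus f -> is_iso g -> comp g (Fmor phi (parr x)) = comp (Fmor phi (parr y)) f ->
     (* g0 is a morphism of G_k(S), with  c_k(f,g) = phi_k(g0) *)
     is_iso g0 -> g = Fmor phi g0 ->
     exists! fg : Hom (pdom x) (pdom y) * Hom (pcod x) (pcod y),
       plus (fst fg) /\ is_iso (snd fg) /\ comp (snd fg) (parr x) = comp (parr y) (fst fg) /\
       Fmor phi (fst fg) = f /\ Fmor phi (snd fg) = g /\ snd fg = g0).

Lemma sig_ext {A : Type} {P : A -> Prop} (x y : sig P) :
  proj1_sig x = proj1_sig y -> x = y.
Proof.
  destruct x as [x px], y as [y py]; simpl; intros ->; f_equal; apply proof_irrelevance.
Qed.

(* morphisms u -> u' of R^+(n): w : s -> s' with u = u' w (same codomain) *)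
Definition PlusN_Hom (R : PreReedy) (n : nat) (a b : PlusObj R n) : Type :=
  {w : Hom (pdom a) (pdom b) |
     existT (fun c => Hom (pdom a) c) (pcod a) (parr a)
     = existT (fun c => Hom (pdom a) c) (pcod b) (comp (parr b) w)}.

Definition PlusN_id (R : PreReedy) (n : nat) (a : PlusObj R n) : PlusN_Hom a a.
Proof.
  exists (idm (pdom a)). rewrite comp_idr. reflexivity.
Defined.

Definition PlusN_comp (R : PreReedy) (n : nat) (a b c : PlusObj R n)
  (w' : PlusN_Hom b c) (w : PlusN_Hom a b) : PlusN_Hom a c.
Proof.
  exists (comp (proj1_sig w') (proj1_sig w)).
  destruct w' as [w' e2], w as [w e1]; simpl.
  pose (F := fun p : {c : R & Hom (pdom b) c} =>
               existT (fun c => Hom (pdom a) c) (projT1 p) (comp (projT2 p) w)).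
  apply (f_equal F) in e2. unfold F in e2; simpl in e2.
  rewrite e1, e2, comp_assoc. reflexivity.
Defined.

Definition PlusN_cat (R : PreReedy) (n : nat) : Cat.
Proof.
  refine (@mkCat (PlusObj R n) (@PlusN_Hom R n) (@PlusN_id R n) (@PlusN_comp R n) _ _ _).
  - intros a b f; apply sig_ext; simpl; apply comp_idl.
  - intros a b f; apply sig_ext; simpl; apply comp_idr.
  - intros a b c d h g f; apply sig_ext; simpl; apply comp_assoc.
Defined.

Definition PlusN (R : PreReedy) (n : nat) : PreReedy :=
  {| rcat := PlusN_cat R n;
     plus := fun a b f => True;
     minus := fun a b f => is_iso f;
     deg := fun a => deg (pdom a) |}.

Definition dom_functor (R : PreReedy) (n : nat) : Functor (PlusN R n) R.
Proof.
  refine (@mkFunctor (PlusN R n) R (fun a => pdom a) (fun a b w => proj1_sig w) _ _);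
  reflexivity.
Defined.

Definition Le_cat (R : PreReedy) (n : nat) : Cat.
Proof.
  refine (@mkCat {r : R | deg r <= n}
            (fun a b => Hom (proj1_sig a) (proj1_sig b))
            (fun a => idm (proj1_sig a))
            (fun a b c g f => comp g f) _ _ _).
  - intros; apply comp_idl.
  - intros; apply comp_idr.
  - intros; apply comp_assoc.
Defined.

Definition LeN (R : PreReedy) (n : nat) : PreReedy :=
  {| rcat := Le_cat R n;
     plus := fun a b (f : Hom (proj1_sig a) (proj1_sig b)) => plus f;
     minus := fun a b (f : Hom (proj1_sig a) (proj1_sig b)) => minus f;
     deg := fun a => deg (proj1_sig a) |}.

Definition incl_functor (R : PreReedy) (n : nat) : Functor (LeN R n) R.
Proof.
  refine (@mkFunctor (LeN R n) R (fun a => proj1_sig a) (fun a b f => f) _ _);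
  reflexivity.
Defined.

(* Main.v *)
Require Import Defs.
From Stdlib Require Import ProofIrrelevance IndefiniteDescription Arith Lia.

Section P1.
Context (E : Cat) (S R : PreReedy) (hS : is_GReedy S) (hR : is_GReedy R)
  (phi : Functor S R) (hphi : is_GMor phi) (k : nat) (Hpb : pullback_cond phi k)
  (X : Functor R E) (s : S) (hs : deg s = k).

Lemma hk : deg (Fobj phi s) = k.
Proof. destruct hphi as [_ [_ hd]]. rewrite hd; exact hs. Qed.

Lemma surjF : forall j : FibObj R (Fobj phi s), exists i : FibObj S s, fib_map hS hR hphi i = j.
Proof.
  intros [r' [u [pu nu]]].
  destruct Hpb as [H1 _].
  destruct (H1 (mkPlusObj pu nu hk) s hs eq_refl) as [x [[Hc Hx] _]].
  destruct x as [dx cx ax px nx dgx]; simpl in *. subst cx.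
  exists (existT _ dx (exist _ ax (conj px nx))).
  unfold fib_map; simpl.
  assert (E1 : Fobj phi dx = r') by (apply (f_equal (fun p => fst (projT1 p))) in Hx; exact Hx).
  subst r'. apply inj_pair2 in Hx. subst u. f_equal. apply sig_ext. reflexivity.
Qed.

Lemma injF : forall i1 i2 : FibObj S s, fib_map hS hR hphi i1 = fib_map hS hR hphi i2 -> i1 = i2.
Proof.
  intros [s1 [v1 [p1 n1]]] [s2 [v2 [p2 n2]]] H.
  destruct Hpb as [H1 _].
  destruct (GMor_plus_noniso hS hR hphi (conj p1 n1)) as [pa na].
  destruct (H1 (mkPlusObj pa na hk) s hs eq_refl) as [x [_ Hu]].
  pose (x1 := mkPlusObj p1 n1 hs : PlusObj S k).
  pose (x2 := mkPlusObj p2 n2 hs : PlusObj S k).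
  assert (e1 := Hu x1 (conj eq_refl eq_refl)).
  apply (f_equal (fun a : FibObj R (Fobj phi s) =>
     existT (fun p : R * R => Hom (fst p) (snd p)) (projT1 a, Fobj phi s) (proj1_sig (projT2 a)))) in H.
  simpl in H.
  assert (e2 := Hu x2 (conj eq_refl (eq_sym H))).
  rewrite e1 in e2.
  apply (f_equal (fun x : PlusObj S k => existT (fun p : S * S => Hom (fst p) (snd p)) (pdom x, pcod x) (parr x))) in e2.
  simpl in e2.
  assert (E1 : s1 = s2) by (apply (f_equal (fun p => fst (projT1 p))) in e2; exact e2).
  subst s2. apply inj_pair2 in e2. subst v2. f_equal. apply sig_ext. reflexivity.
Qed.

Lemma liftF : forall (i i' : FibObj S s)
  (w : dA (Lk_diag X (Fobj phi s)) (fib_map hS hR hphi i) (fib_map hS hR hphi i')),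
  exists w0 : dA (Lk_diag (precomp phi X) s) i i', Fmor phi (proj1_sig w0) = proj1_sig w.
Proof.
  intros [s1 [v1 [p1 n1]]] [s2 [v2 [p2 n2]]] [w [pw Hw]]. simpl in *.
  destruct Hpb as [_ H2].
  assert (idiso : forall (C : Cat) (a : C), is_iso (idm a)).
  { intros C a; exists (idm a); split; apply comp_idl. }
  assert (Hcomm : comp (idm (Fobj phi s)) (Fmor phi v1) = comp (Fmor phi v2) w).
  { rewrite comp_idl; exact Hw. }
  destruct (H2 (mkPlusObj p1 n1 hs) (mkPlusObj p2 n2 hs) w (idm _) (idm s) pw (idiso _ _)
              Hcomm (idiso _ _) (eq_sym (F_id phi s)))
    as [[w0 t] [[pw0 [_ [Hc [Hf [_ Ht]]]]] _]].
  simpl in *. subst t. rewrite comp_idl in Hc.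
  exists (exist _ w0 (conj pw0 Hc)). simpl; exact Hf.
Qed.

Lemma main1 :
     forall (LS : E) (lamS : forall i, Hom (dD (Lk_diag (precomp phi X) s) i) LS)
            (LR : E) (lamR : forall i, Hom (dD (Lk_diag X (Fobj phi s)) i) LR),
       is_colimit (Lk_diag (precomp phi X) s) LS lamS ->
       is_colimit (Lk_diag X (Fobj phi s)) LR lamR ->
       forall m : Hom LS LR,
         (forall i, comp m (lamS i) = lamR (fib_map hS hR hphi i)) ->
         is_iso m.
Proof.
  intros LS lamS LR lamR [coS uS] [coR uR] m Hm.
  pose (pre := fun j => constructive_indefinite_description _ (surjF j)).
  pose (mu := fun j => match proj2_sig (pre j) in _ = j'
                 return Hom (dD (Lk_diag X (Fobj phi s)) j') LS with
                 eq_refl => lamS (proj1_sig (pre j)) end).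
  assert (mu_fm : forall i, mu (fib_map hS hR hphi i) = lamS i).
  { intro i. unfold mu. destruct (pre (fib_map hS hR hphi i)) as [i' Hi']. simpl.
    assert (i' = i) by (apply injF; exact Hi'). subst i'.
    rewrite (proof_irrelevance _ Hi' eq_refl). reflexivity. }
  assert (muco : is_cocone (Lk_diag X (Fobj phi s)) LS mu).
  { assert (G : forall (i i' : FibObj S s) (e : dA (Lk_diag X (Fobj phi s)) (fib_map hS hR hphi i) (fib_map hS hR hphi i')),
       comp (mu (fib_map hS hR hphi i')) (dM (Lk_diag X (Fobj phi s)) e) = mu (fib_map hS hR hphi i)).
    { intros i i' e. rewrite !mu_fm. destruct (liftF i i' e) as [w0 Hw0].
      destruct e as [we pe]; simpl in *; subst we. exact (coS i i' w0). }
    intros j j' e.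
    pose proof (proj2_sig (pre j)) as Hj. pose proof (proj2_sig (pre j')) as Hj'.
    cbv beta in Hj, Hj'.
    revert e. destruct Hj, Hj'. apply G. }
  destruct (uR LS mu muco) as [n [Hn _]].
  exists n. split.
  - destruct (uS LS lamS coS) as [h [_ Hh]].
    transitivity h; [symmetry|]; apply Hh; intro i.
    + rewrite <- comp_assoc, Hm. exact (eq_trans (Hn _) (mu_fm i)).
    + apply comp_idl.
  - destruct (uR LR lamR coR) as [h [_ Hh]].
    transitivity h; [symmetry|]; apply Hh; intro j.
    + rewrite <- comp_assoc, Hn.
      pose proof (proj2_sig (pre j)) as Hj. cbv beta in Hj. destruct Hj.
      rewrite mu_fm. apply Hm.
    + apply comp_idl.
Qed.
End P1.

Lemma part3 (R : PreReedy) (hR : is_GReedy R) (n k : nat) : pullback_cond (incl_functor R n) k.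
Proof.
  destruct hR as [_ [pcomp [_ [_ [hdeg [_ [hiso _]]]]]]].
  split.
  - intros [s0 r0 u pu nu du] b H1 H2. simpl in *. subst r0.
    assert (hle : deg s0 <= n).
    { pose proof (hdeg _ _ u pu nu). pose proof (proj2_sig b). simpl in *. lia. }
    assert (nu' : ~ @is_iso (LeN R n) (exist _ s0 hle) b u).
    { intro Hi. apply (is_iso_Fmor (incl_functor R n)) in Hi. exact (nu Hi). }
    exists (@mkPlusObj (LeN R n) k (exist _ s0 hle) b u pu nu' H1).
    split; [split; reflexivity|].
    intros [dx cx ax px nx dgx] [Hc Hx]. simpl in *. subst cx.
    destruct dx as [s1 hs1]. simpl in *.
    assert (E1 : s1 = s0) by (apply (f_equal (fun p => fst (projT1 p))) in Hx; exact Hx).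
    subst s1. apply inj_pair2 in Hx. subst ax.
    assert (hs1 = hle) by apply proof_irrelevance. subst hs1.
    f_equal; apply proof_irrelevance.
  - intros x y f g g0 pf ig Hc ig0 Hg. simpl in *. subst g.
    exists (f, g0). split.
    + simpl. repeat split; auto.
    + intros [a' b'] [_ [_ [_ [Ha [_ Hb]]]]]. simpl in *. subst. reflexivity.
Qed.

Lemma part2 (R : PreReedy) (hR : is_GReedy R) (n k : nat) : pullback_cond (dom_functor R n) k.
Proof.
  destruct hR as [_ [pcomp [_ [_ [hdeg [_ [hiso _]]]]]]].
  split.
  - intros [s0 r0 u pu nu du] b H1 H2. simpl in *. subst r0.
    assert (pc : plus (comp (parr b) u)) by (apply pcomp; [exact (@pplus _ _ b)|exact pu]).
    assert (nc : ~ is_iso (comp (parr b) u)).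
    { intro Hi. apply hiso in Hi. pose proof (hdeg _ _ u pu nu).
      pose proof (hdeg _ _ (parr b) (@pplus _ _ b) (@pniso _ _ b)). lia. }
    pose (c := @mkPlusObj R n s0 (pcod b) (comp (parr b) u) pc nc (@pdeg _ _ b)).
    pose (w := exist (fun w : Hom (pdom c) (pdom b) =>
                 existT (fun c0 => Hom (pdom c) c0) (pcod c) (parr c)
                 = existT (fun c0 => Hom (pdom c) c0) (pcod b) (comp (parr b) w)) u eq_refl
           : @Hom (PlusN R n) c b).
    assert (nw : ~ is_iso w).
    { intro Hi. apply (is_iso_Fmor (dom_functor R n)) in Hi. exact (nu Hi). }
    exists (@mkPlusObj (PlusN R n) k c b w I nw H1).
    split; [split; reflexivity|].
    intros [dx cx ax px nx dgx] [Hc Hx]. simpl in *. subst cx.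
    assert (E1 : pdom dx = s0) by (apply (f_equal (fun p => fst (projT1 p))) in Hx; exact Hx).
    destruct dx as [s1 r1 u1 p1 n1 d1]. simpl in *. subst s1.
    apply inj_pair2 in Hx. destruct ax as [w1 Hw]. simpl in *. subst w1.
    assert (E2 : r1 = pcod b) by (exact (f_equal (@projT1 _ _) Hw)).
    subst r1. pose proof (inj_pair2 _ _ _ _ _ Hw) as Hw'. subst u1.
    assert (p1 = pc) by apply proof_irrelevance. subst p1.
    assert (n1 = nc) by apply proof_irrelevance. subst n1.
    assert (d1 = pdeg b) by apply proof_irrelevance. subst d1.
    assert (Hw = eq_refl) by apply proof_irrelevance. subst Hw.
    destruct px.
    f_equal; apply proof_irrelevance.
  - intros [dx cx [wx Hx] px nx dgx] [dy cy [wy Hy] py ny dgy] f g [g0 Hg0] pf ig Hc ig0 Hg.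
    simpl in *. subst g.
    assert (Ef : existT (fun c => Hom (pdom dx) c) (pcod dx) (parr dx)
               = existT (fun c => Hom (pdom dx) c) (pcod dy) (comp (parr dy) f)).
    { pose proof (f_equal (fun p : {c : R & Hom (pdom cx) c} =>
               existT (fun c => Hom (pdom dx) c) (projT1 p) (comp (projT2 p) wx)) Hg0) as A.
      pose proof (f_equal (fun p : {c : R & Hom (pdom dy) c} =>
               existT (fun c => Hom (pdom dx) c) (projT1 p) (comp (projT2 p) f)) Hy) as B.
      simpl in A, B. rewrite Hx, A, B, <- !comp_assoc, Hc. reflexivity. }
    exists (exist _ f Ef, exist _ g0 Hg0). split.
    + simpl. repeat split; auto. apply sig_ext. simpl. exact Hc.
    + intros [a' b'] [_ [_ [_ [Ha [_ Hb]]]]]. simpl in *. subst b'.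
      f_equal. apply sig_ext. simpl. symmetry. exact Ha.
Qed.
Theorem lemma4p4 :
  (forall (E : Cat) (S R : PreReedy) (hS : is_GReedy S) (hR : is_GReedy R)
          (phi : Functor S R) (hphi : is_GMor phi) (k : nat),
     pullback_cond phi k ->
     forall (X : Functor R E) (s : S), deg s = k ->
     forall (LS : E) (lamS : forall i, Hom (dD (Lk_diag (precomp phi X) s) i) LS)
            (LR : E) (lamR : forall i, Hom (dD (Lk_diag X (Fobj phi s)) i) LR),
       is_colimit (Lk_diag (precomp phi X) s) LS lamS ->
       is_colimit (Lk_diag X (Fobj phi s)) LR lamR ->
       forall m : Hom LS LR,
         (forall i, comp m (lamS i) = lamR (fib_map hS hR hphi i)) ->
         is_iso m)
  /\ (forall R : PreReedy, is_GReedy R ->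
        forall n k : nat, pullback_cond (dom_functor R n) k)
  /\ (forall R : PreReedy, is_GReedy R ->
        forall n k : nat, pullback_cond (incl_functor R n) k).
Proof.
  split; [|split].
  - intros E S R hS hR phi hphi k Hpb X s hs. exact (@main1 E S R hS hR phi hphi k Hpb X s hs).
  - exact part2.
  - exact part3.
Qed.
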